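(* Let $G$ be a graph and let $M$ be a matching in $G$ with parts $U$ and $W$ (so every edge of $M$ joins a vertex of $U$ to a vertex of $W$, and $U\cup W$ is the set of vertices covered by $M$), such that every vertex $w\in W$ has exactly one neighbor in $G$ among the vertices covered by $M$. Suppose that $|N_G(U)\setminus (W\cup N_G(W))|\geq k$. Then $f_o(G)\geq k/4$.
   Context: For a set $S$ of vertices, $N_G(S)=\bigcup_{s\in S}N_G(s)$ is the union of the neighborhoods of the vertices of $S$. For a graph $G$, $f_o(G)$ denotes the maximum of $|V_0|$ over all $V_0\subseteq V(G)$ such that the induced subgraph $G[V_0]$ has all degrees odd. *)

(* Defs.v *)
(* A simple graph on a finite vertex type T is a symmetric,
   irreflexive relation e : rel T. *)
From mathcomp Require Import all_boot all_order all_algebra.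
Set Implicit Arguments. Unset Strict Implicit. Unset Printing Implicit Defensive.

Section Defs.
Variables (T : finType) (e : rel T).

Definition nbhd (S : {set T}) : {set T} := [set x | [exists s in S, e s x]].

Definition all_odd_induced (V0 : {set T}) : bool :=
  [forall v in V0, odd #|[set u in V0 | e v u]|].

Definition f_o : nat := \max_(V0 : {set T} | all_odd_induced V0) #|V0|.

(* M is a matching given as a set of ordered edges (u,w), u in part U, w in part W *)
Definition is_matching (M : {set T * T}) : bool :=
  [forall p in M, e p.1 p.2] &&
  [forall p in M, forall q in M, (p != q) ==>
     [&& p.1 != q.1, p.1 != q.2, p.2 != q.1 & p.2 != q.2]].

Definition partU (M : {set T * T}) : {set T} := [set p.1 | p in M].
Definition partW (M : {set T * T}) : {set T} := [set p.2 | p in M].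
End Defs.

(* Main.v *)
Require Import Defs.
From mathcomp Require Import all_boot all_order all_algebra.
From mathcomp Require Import zify.
Set Implicit Arguments. Unset Strict Implicit. Unset Printing Implicit Defensive.

Section Gallai.
Variable T : finType.

Definition even_on (r : rel T) (A : {set T}) :=
  [forall v in A, ~~ odd #|[set u in A | r v u]|].

Lemma even_on0 r : even_on r set0.
Proof. by apply/forall_inP => v; rewrite inE. Qed.

Definition lc (r : rel T) (N : {set T}) : rel T :=
  fun a b => if [&& a \in N, b \in N & a != b] then ~~ r a b else r a b.

Lemma deg_same (r : rel T) (N P : {set T}) (x : T) : x \notin N ->
  [set u in P | lc r N x u] = [set u in P | r x u].
Proof. by move=> xN; apply/setP => u; rewrite !inE /lc (negbTE xN). Qed.

Lemma deg_flip (r : rel T) (N P : {set T}) x :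
  irreflexive r -> x \in N -> x \in P ->
  odd #|[set u in P | r x u]| =
    odd #|[set u in P | lc r N x u]| (+) ~~ odd #|P :&: N|.
Proof.
move=> ri xN xP.
set Dr := [set u in P | r x u]; set Dl := [set u in P | lc r N x u].
set E := (P :&: N) :\ x.
have h1 : Dr :\: N = Dl :\: N.
  apply/setP => u; rewrite !inE /lc xN /=.
  by case: (u \in N).
have h2 : Dr :&: N = E :&: Dr.
  apply/setP => u; rewrite !inE.
  case: (eqVneq u x) => [->|ne]; first by rewrite ri !andbF.
  by case: (u \in P); case: (u \in N); rewrite ?andbF ?andbT.
have h3 : Dl :&: N = E :\: Dr.
  apply/setP => u; rewrite !inE /lc xN /=.
  case: (eqVneq u x) => [->|ne]; first by rewrite ?eqxx ?ri /= ?andbF ?andbT ?ri.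
  by case: (u \in P); case: (u \in N); case: (r x u).
have c1 := cardsID N Dr. have c2 := cardsID N Dl. have c3 := cardsID Dr E.
have c4 := cardsD1 x (P :&: N).
rewrite inE xP xN /= in c4.
rewrite -c1 -c2 h1 h2 h3 c4 -c3.
rewrite !oddD /=.
by case: (odd #|E :&: Dr|); case: (odd #|E :\: Dr|); case: (odd #|Dl :\: N|).
Qed.

Lemma key_odd (r : rel T) (N P : {set T}) : irreflexive r -> even_on (lc r N) P ->
  odd #|P :&: N| -> even_on r P.
Proof.
move=> ri /forall_inP ev oP; apply/forall_inP => x xP.
case: (boolP (x \in N)) => xN.
  by rewrite (deg_flip ri xN xP) oP (negbTE (ev x xP)).
by rewrite -(deg_same r P xN); apply: ev.
Qed.

Lemma key_even (r : rel T) (A : {set T}) (v : T) (P : {set T}) : irreflexive r -> symmetric r -> v \in A ->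
  P \subset A :\ v ->
  even_on (lc r [set u in A | r v u]) P ->
  ~~ odd #|P :&: [set u in A | r v u]| -> even_on r (v |: P).
Proof.
move=> ri rs vA sP /forall_inP ev eP.
set N := [set u in A | r v u] in ev eP *.
have vP : v \notin P.
  apply/negP => /(subsetP sP); by rewrite !inE eqxx.
have PA : forall u, u \in P -> u \in A.
  by move=> u /(subsetP sP); rewrite !inE => /andP[].
apply/forall_inP => x; rewrite in_setU1 => /orP[/eqP->|xP].
  have -> : [set u in v |: P | r v u] = P :&: N.
    apply/setP => u; rewrite !inE.
    case: (eqVneq u v) => [->|ne] /=; first by rewrite ri (negbTE vP).
    case uP: (u \in P) => //=. by rewrite (PA u uP).
  exact: eP.
case: (boolP (x \in N)) => xN.
  have -> : [set u in v |: P | r x u] = v |: [set u in P | r x u].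
    apply/setP => u; rewrite !inE.
    case: (eqVneq u v) => [->|ne] /=; last by [].
    by rewrite rs; move: xN; rewrite inE => /andP[].
  rewrite cardsU1 inE (negbTE vP) /= (deg_flip ri xN xP).
  by rewrite (negbTE (ev x xP)) (negbTE eP).
have -> : [set u in v |: P | r x u] = [set u in P | r x u].
  apply/setP => u; rewrite !inE.
  case: (eqVneq u v) => [->|ne] /=; last by [].
  rewrite (negbTE vP) rs.
  by move: xN; rewrite inE (PA x xP) /= => /negbTE ->.
by rewrite -(deg_same r P xN); apply: ev.
Qed.

Lemma gallai_part n : forall (r : rel T) (A : {set T}), #|A| <= n ->
  symmetric r -> irreflexive r ->
  exists B : {set T}, [/\ B \subset A, even_on r B & even_on r (A :\: B)].
Proof.
elim: n => [|n IH] r A hA rs ri.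
  have A0 : A = set0 by apply/cards0_eq/eqP; rewrite -leqn0.
  by exists A; rewrite subxx setDv A0 even_on0.
case hev: (even_on r A).
  by exists A; rewrite subxx setDv hev even_on0.
move/negbT: hev => /forall_inPn [v vA]; rewrite negbK => oddv.
set N := [set u in A | r v u] in oddv.
set A' := A :\ v.
have NA' : N \subset A'.
  apply/subsetP=> u; rewrite !inE => /andP[uA rvu]; rewrite uA andbT.
  by apply/eqP=> uv; rewrite uv ri in rvu.
have lcs : symmetric (lc r N).
  move=> a b; rewrite /lc eq_sym (rs a b).
  by case: (a \in N); case: (b \in N).
have lci : irreflexive (lc r N).
  by move=> a; rewrite /lc eqxx !andbF ri.
have hA' : #|A'| <= n.
  have := cardsD1 v A; rewrite vA /A'; lia.
have [B' [sB' eB' eC']] := IH (lc r N) A' hA' lcs lci.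
have vB' : v \notin B'.
  apply/negP => /(subsetP sB'); by rewrite !inE eqxx.
have par : odd #|B' :&: N| (+) odd #|(A' :\: B') :&: N| = true.
  have := cardsID B' N.
  have -> : (A' :\: B') :&: N = N :\: B'.
    apply/setP => u; rewrite !inE.
    case: (eqVneq u v) => [->|]; rewrite ?ri ?andbF //=.
    by case: (u \in B'); case: (u \in A).
  rewrite setIC => h. by rewrite -oddD h.
have sA' : A' \subset A :\ v by [].
case: (boolP (odd #|B' :&: N|)) => oB.
  exists B'; split.
  - by apply: subset_trans sB' _; apply: subsetDl.
  - exact: key_odd ri eB' oB.
  have -> : A :\: B' = v |: (A' :\: B').
    apply/setP => u; rewrite !inE.
    case: (eqVneq u v) => [->|ne] /=; first by rewrite vA (negbTE vB').
    by rewrite andbC.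
  apply: (key_even ri rs vA).
  - by apply: subset_trans (subsetDl _ _) _.
  - exact: eC'.
  by move: par; rewrite oB; case: (odd _).
exists (v |: B'); split.
- by rewrite subUset sub1set vA; apply: subset_trans sB' _; apply: subsetDl.
- apply: (key_even ri rs vA) => //.
have -> : A :\: (v |: B') = A' :\: B'.
  apply/setP => u; rewrite !inE.
  by case: (eqVneq u v) => [->|ne] /=; rewrite ?andbF.
apply: key_odd ri eC' _.
by move: par; rewrite (negbTE oB).
Qed.

Lemma gallai_half (r : rel T) (A : {set T}) : symmetric r -> irreflexive r ->
  exists Y : {set T}, [/\ Y \subset A, even_on r Y & #|A| <= 2 * #|Y|].
Proof.
move=> rs ri.
have [B [sB eB eC]] := gallai_part (leqnn #|A|) rs ri.
have c := cardsID B A.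
have e1 : A :&: B = B by apply/setIidPr.
rewrite e1 in c.
case: (leqP #|A :\: B| #|B|) => h.
  by exists B; split => //; lia.
exists (A :\: B); split => //; first exact: subsetDl.
lia.
Qed.

Lemma card_sum (A : {set T}) (p : pred T) :
  #|[set x in A | p x]| = \sum_(x in A) (p x : nat).
Proof.
rewrite -sum1_card.
rewrite (eq_bigl (fun x => (x \in A) && p x)); last by move=> x; rewrite inE.
rewrite big_mkcondr /=; apply: eq_bigr => x _; by case: (p x).
Qed.

Lemma card_sumS (A : {set {set T}}) (p : pred {set T}) :
  #|[set x in A | p x]| = \sum_(x in A) (p x : nat).
Proof.
rewrite -sum1_card.
rewrite (eq_bigl (fun x => (x \in A) && p x)); last by move=> x; rewrite inE.
rewrite big_mkcondr /=; apply: eq_bigr => x _; by case: (p x).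
Qed.

Lemma averaging (e : rel T) (U X : {set T}) :
  (forall x, x \in X -> exists2 u, u \in U & e x u) ->
  exists S : {set T}, S \subset U /\
    #|X| <= 2 * #|[set x in X | odd #|[set u in S | e x u]|]|.
Proof.
move=> H.
set P := powerset U.
pose c x (S : {set T}) := odd #|[set u in S | e x u]|.
have half : forall x, x \in X -> 2 * #|[set S in P | c x S]| = #|P|.
  move=> x /H [u0 u0U ex].
  pose t (S : {set T}) := if u0 \in S then S :\ u0 else u0 |: S.
  have tK : involutive t.
    move=> S; rewrite /t; case: (boolP (u0 \in S)) => h.
      by rewrite !inE eqxx /= setD1K.
    by rewrite setU11 setU1K.
  have tP : forall S, (t S \in P) = (S \in P).
    move=> S; rewrite /P !powersetE /t; case: (boolP (u0 \in S)) => h.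
      apply/idP/idP => hs; last by apply: subset_trans (subsetDl _ _) hs.
      by rewrite -(setD1K h) subUset sub1set u0U.
    by rewrite subUset sub1set u0U.
  have tP' : forall S, (t S \subset U) = (S \subset U).
    by move=> S; have := tP S; rewrite /P !powersetE.
  have tc : forall S, c x (t S) = ~~ c x S.
    move=> S; rewrite /c /t; case: (boolP (u0 \in S)) => h.
      have -> : [set u in S :\ u0 | e x u] = [set u in S | e x u] :\ u0.
        by apply/setP => u; rewrite !inE andbA.
      rewrite [in RHS](cardsD1 u0) inE h ex /= .
      by case: (odd _).
    have -> : [set u in u0 |: S | e x u] = u0 |: [set u in S | e x u].
      apply/setP => u; rewrite !inE.
      by case: (eqVneq u u0) => [->|].
    by rewrite cardsU1 inE (negbTE h) /=.
  have ev : #|[set S in P | ~~ c x S]| = #|[set S in P | c x S]|.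
    rewrite -(card_imset _ (can_inj tK)).
    apply: eq_card => S; rewrite !inE.
    apply/imsetP/idP.
      move=> [S' ]; rewrite !inE => /andP[S'P nc] ->.
        by rewrite tP' S'P tc nc.
    move=> /andP[SP cS]; exists (t S); last by rewrite tK.
    by rewrite !inE tP' SP tc cS.
  have := cardsID [set S | c x S] P.
  have -> : P :&: [set S | c x S] = [set S in P | c x S].
    by apply/setP => S; rewrite !inE.
  have -> : P :\: [set S | c x S] = [set S in P | ~~ c x S].
    by apply/setP => S; rewrite !inE andbC.
  rewrite ev; lia.
case: (boolP [exists S in P, #|X| <= 2 * #|[set x in X | c x S]|]).
  move=> /exists_inP [S SP hS]; exists S; split => //.
  by rewrite /P powersetE in SP.
move=> /exists_inPn hn; exfalso.
have h1 : \sum_(S in P) (2 * #|[set x in X | c x S]|).+1 <= \sum_(S in P) #|X|.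
  by apply: leq_sum => S SP; rewrite ltnNge hn.
have h2 : \sum_(S in P) (2 * #|[set x in X | c x S]|).+1 =
   2 * \sum_(S in P) #|[set x in X | c x S]| + #|P|.
  rewrite -sum1_card big_distrr /= -big_split /=.
  by apply: eq_bigr => S _; rewrite addn1.
have h3 : 2 * \sum_(S in P) #|[set x in X | c x S]| = #|X| * #|P|.
  rewrite big_distrr /=.
  under eq_bigr => S _ do rewrite card_sum big_distrr /=.
  rewrite exchange_big /=.
  rewrite -sum_nat_const; apply: eq_bigr => x xX.
  rewrite -(half x xX) card_sumS big_distrr /=.
  by apply: eq_bigr.
rewrite sum_nat_const h2 h3 in h1.
have : set0 \in P by rewrite /P powersetE sub0set.
move=> h0; have : 0 < #|P| by apply/card_gt0P; exists set0.
rewrite mulnC in h1. lia.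
Qed.
End Gallai.

From mathcomp Require Import lra.
Import GRing.Theory Num.Theory.
Local Open Scope ring_scope.

Lemma main_nat (T : finType) (e : rel T) (e_sym : symmetric e)
  (e_irr : irreflexive e) (M : {set T * T}) :
  is_matching e M ->
  (forall w, w \in partW M ->
     #|[set x in partU M :|: partW M | e w x]| = 1%N) ->
  (#|nbhd e (partU M) :\: (partW M :|: nbhd e (partW M))| <= 4 * f_o e)%N.
Proof.
move=> /andP[/forall_inP hE /forall_inP hD] hW.
set U := partU M; set W := partW M.
set X := nbhd e U :\: (W :|: nbhd e W).
have inj1 : forall p q, p \in M -> q \in M -> p.1 = q.1 -> p = q.
  move=> p q pM qM h; apply/eqP; apply: contraT => ne.
  by have := implyP (forall_inP (hD p pM) q qM) ne; rewrite h eqxx.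
have inj2 : forall p q, p \in M -> q \in M -> p.2 = q.2 -> p = q.
  move=> p q pM qM h; apply/eqP; apply: contraT => ne.
  by have := implyP (forall_inP (hD p pM) q qM) ne; rewrite h eqxx !andbF.
have cross : forall p q, p \in M -> q \in M -> p.1 != q.2.
  move=> p q pM qM; case: (eqVneq p q) => [->|ne].
    by apply/eqP => h; have := hE q qM; rewrite h e_irr.
  by have := implyP (forall_inP (hD p pM) q qM) ne => /and4P[].
have UW : forall u, u \in U -> u \notin W.
  move=> u /imsetP [p pM ->]; apply/imsetP => [[q qM h]].
  by have := cross p q pM qM; rewrite h eqxx.
have partner : forall p x, p \in M -> x \in U :|: W -> e p.2 x -> x = p.1.
  move=> p x pM xUW ex.
  have pW : p.2 \in W by apply/imsetP; exists p.
  have /cards1P [y hy] : #|[set x in U :|: W | e p.2 x]| == 1%N by rewrite hW.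
  have h1 : x \in [set x in U :|: W | e p.2 x] by rewrite inE xUW ex.
  have h2 : p.1 \in [set x in U :|: W | e p.2 x].
    rewrite inE e_sym hE // andbT inE.
    by apply/orP; left; apply/imsetP; exists p.
  by rewrite hy !inE in h1 h2; rewrite (eqP h1) (eqP h2).
have XW : forall x w, x \in X -> w \in W -> e w x = false.
  move=> x w; rewrite !inE negb_or => /andP[/andP[_ /exists_inPn hx] _] wW.
  by apply/negbTE; apply: hx.
have XU : forall x, x \in X -> x \notin U.
  move=> x xX; apply/negP => /imsetP [p pM hx].
  have pW : p.2 \in W by apply/imsetP; exists p.
  by have := XW x p.2 xX pW; rewrite hx e_sym hE.
have XWn : forall x, x \in X -> x \notin W.
  by move=> x; rewrite !inE negb_or => /andP[/andP[]].
have Xnb : forall x, x \in X -> exists2 u, u \in U & e x u.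
  move=> x; rewrite !inE => /andP[_ /exists_inP [u uU eu]].
  by exists u => //; rewrite e_sym.
have [S [SU hS]] := averaging Xnb.
set O := [set x in X | odd #|[set u in S | e x u]|] in hS.
have [Y [YO eY hY]] := gallai_half O e_sym e_irr.
have YX : forall y, y \in Y -> y \in X.
  by move=> y /(subsetP YO); rewrite inE => /andP[].
have SUm : forall u, u \in S -> u \in U by move=> u /(subsetP SU).
pose d u := #|[set z in S :|: Y | e u z]|.
set W' := [set p.2 | p in [set p in M | (p.1 \in S) && ~~ odd (d p.1)]].
have W'W : forall w, w \in W' -> w \in W.
  by move=> w /imsetP [p]; rewrite inE => /andP[pM _] ->; apply/imsetP; exists p.
set V0 := S :|: Y :|: W'.
have odd_ok : all_odd_induced e V0.
  apply/forall_inP => x; rewrite !inE => /orP[/orP[xS|xY]|xW'].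
  -
    have [p pM px] : exists2 p, p \in M & x = p.1.
      by have /imsetP [p pM ->] := SUm x xS; exists p.
    set D := [set u in V0 | e x u].
    have := cardsID W' D.
    have -> : D :\: W' = [set z in S :|: Y | e x z].
      apply/setP => u; rewrite !inE.
      case: (boolP (u \in W')) => uW' /=; last by rewrite orbF.
      have uW := W'W u uW'.
      case uS: (u \in S); first by have := UW u (SUm u uS); rewrite uW.
      case uY: (u \in Y) => //.
      by have := XWn u (YX u uY); rewrite uW.
    have -> : D :&: W' = if ~~ odd (d x) then [set p.2] else set0.
      apply/setP => u; rewrite !inE.
      apply/idP/idP.
        move=> /andP[/andP[_ exu] /imsetP [q]]; rewrite inE => /andP[qM /andP[qS qd]] uq.
        have := partner q x qM; rewrite -uq e_sym exu !inE (SUm x xS) => /(_ isT isT) xq.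
        have pq : p = q by apply: inj1 => //; rewrite -px.
        by rewrite xq qd !inE uq pq.
      case: (boolP (odd (d x))) => hd; first by rewrite inE.
      rewrite inE => /eqP ->.
      have hw : p.2 \in W'.
        by apply/imsetP; exists p => //; rewrite inE pM -px xS.
      by rewrite hw orbT /= px hE.
    case: (boolP (odd (d x))) => hd; rewrite ?cards0 ?cards1 => <-.
      by rewrite add0n.
    by rewrite /= oddD -/(d x) (negbTE hd).
  -
    set D := [set u in V0 | e x u].
    have := cardsID S D.
    have -> : D :&: S = [set u in S | e x u].
      by apply/setP => u; rewrite !inE; case: (u \in S); rewrite ?andbT ?andbF.
    have -> : D :\: S = [set u in Y | e x u].
      apply/setP => u; rewrite !inE.
      case uS: (u \in S) => /=.
        case uY: (u \in Y) => //=.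
        by have := XU u (YX u uY); rewrite (SUm u uS).
      case: (boolP (u \in W')) => uW'; last by rewrite orbF.
      rewrite orbT /= e_sym (XW x u (YX x xY) (W'W u uW')) andbF.
      by [].
    move=> <-; rewrite oddD.
    have : x \in O by apply: (subsetP YO).
    rewrite inE => /andP[_ ->].
    by rewrite (negbTE (forall_inP eY x xY)).
  -
    move: xW' => /imsetP [p]; rewrite inE => /andP[pM /andP[pS _]] ->.
    have -> : [set u in V0 | e p.2 u] = [set p.1].
      apply/setP => u; rewrite !inE.
      apply/idP/idP.
        move=> /andP[/orP[/orP[uS|uY]|uW'] eu].
        + by rewrite (partner p u pM) // inE (SUm u uS).
        + have pW : p.2 \in W by apply/imsetP; exists p.
          by rewrite (XW u p.2 (YX u uY) pW) in eu.
        + by rewrite (partner p u pM) // inE (W'W u uW') orbT.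
      by move=> /eqP ->; rewrite pS /= e_sym hE.
    by rewrite cards1.
have : (#|V0| <= f_o e)%N by rewrite /f_o; apply: (@leq_bigmax_cond _ (all_odd_induced e) (fun V : {set T} => #|V|) V0).
have : (#|Y| <= #|V0|)%N by apply: subset_leq_card; apply/subsetP => y yY; rewrite /V0 !inE yY orbT.
have : (#|X| <= 2 * #|O|)%N by [].
lia.
Qed.

Theorem lemma2p3 (T : finType) (e : rel T) (e_sym : symmetric e)
  (e_irr : irreflexive e) (M : {set T * T}) (k : rat) :
  is_matching e M ->
  (forall w, w \in partW M ->
     #|[set x in partU M :|: partW M | e w x]| = 1%N) ->
  k <= (#|nbhd e (partU M) :\: (partW M :|: nbhd e (partW M))|)%:R ->
  k / 4 <= (f_o e)%:R.
Proof.
move=> hM hW hk.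
have h := main_nat e_sym e_irr hM hW.
have : (#|nbhd e (partU M) :\: (partW M :|: nbhd e (partW M))|%:R : rat) <= (4 * f_o e)%:R.
  by rewrite ler_nat.
rewrite natrM => h2.
lra.
Qed.
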